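(* Let $T=\{0,\dots,N\}$ and $\mathbb{F}$ a field. Let $C_\bullet$, $C'_\bullet$ be filtrations of finite-dimensional chain complexes $C$, $C'$ over $\mathbb{F}$ with filtration compatible ordered bases $\mathfrak{C}=(c_1,\dots,c_n)$, $\mathfrak{C}'=(c'_1,\dots,c'_n)$ and filtration boundary matrices $D$, $D'$. Let $\varphi_\bullet\colon C_\bullet\to C'_\bullet$ be an injective morphism of filtrations of chain complexes with $\varphi=\varphi_N$ an isomorphism, $F$ its matrix with respect to $\mathfrak{C},\mathfrak{C}'$, and $D^{\varphi}=DF^{-1}=F^{-1}D'$. Let $V$, $V^{\varphi}$ be invertible upper-triangular matrices such that $R=DV$ and $R^{\varphi}=D^{\varphi}V^{\varphi}$ are reduced; interpret columns of $R^{\varphi}$ as elements of $C$ via coordinates in $\mathfrak{C}$ and columns of $V^{\varphi}$ and $FR^{\varphi}$ as elements of $C'$ via coordinates in $\mathfrak{C}'$. Then $\mathfrak{B}=\operatorname{cols}FR^{\varphi}$ is a filtration compatible basis for the filtration $\varphi_\bullet(Z_*(C_\bullet))\cap B_*(C'_\bullet)$, $t\mapsto\varphi_t(\ker\partial|_{C_t})\cap\partial(C'_t)$, and for all $j$ with $r^{\varphi}_j\neq0$, \[ \operatorname{supp}_{\varphi_\bullet(Z_*(C_\bullet))\cap B_*(C'_\bullet)}(Fr^{\varphi}_j)=\operatorname{supp}_{C_\bullet}(r^{\varphi}_j)\cap\operatorname{supp}_{C'_\bullet}(v^{\varphi}_j). \]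
   Context: A chain complex is a finite-dimensional graded vector space with differential $\partial$ of degree $-1$, $\partial^2=0$; a filtration of chain complexes is a chain of subcomplexes $C_0\subseteq\dots\subseteq C_N=C$. Support: $\operatorname{supp}_{M_\bullet}(m)=\{t\mid m\in M_t\}$. A basis $\mathfrak{M}$ of $M_N$ is filtration compatible if $\mathfrak{M}\cap M_t$ is a basis of $M_t$ for all $t$; an ordered such basis is a filtration compatible ordered basis if $m\le m'$ implies $\operatorname{supp}(m')\subseteq\operatorname{supp}(m)$. The filtration boundary matrix is the matrix of $\partial$ in that basis. For a matrix $X$, $x_j$ is its $j$-th column, $\operatorname{cols}X$ the family of its nonzero columns; $\operatorname{piv}x_j$ is the largest row index of a nonzero entry of a nonzero column; $X$ is reduced if no two nonzero columns have the same pivot. *)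

(* Defs.v *)
From HB Require Import structures.
From mathcomp Require Import all_boot all_order all_algebra.
Set Implicit Arguments. Unset Strict Implicit. Unset Printing Implicit Defensive.
Import GRing.Theory.
Local Open Scope ring_scope.

Section Defs.
Variable F : fieldType.

Definition chain_complex (U : vectType F) (d : 'End(U)) : Prop :=
  (d \o d = 0)%VF.

Definition filtration_of_complexes (U : vectType F) (N : nat) (d : 'End(U))
  (Ct : 'I_N.+1 -> {vspace U}) : Prop :=
  [/\ forall s t : 'I_N.+1, (s <= t)%N -> (Ct s <= Ct t)%VS,
      forall t, (d @: Ct t <= Ct t)%VS
    & Ct ord_max = fullv].

Definition supp (U : vectType F) (N : nat) (Mt : 'I_N.+1 -> {vspace U}) (m : U)
  : {set 'I_N.+1} := [set t | m \in Mt t].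

Definition filt_compatible (U : vectType F) (N : nat) (Mt : 'I_N.+1 -> {vspace U})
  (B : seq U) : Prop :=
  basis_of (Mt ord_max) B /\
  forall t, basis_of (Mt t) [seq b <- B | b \in Mt t].

Definition filt_ordered_basis (U : vectType F) (N n : nat)
  (Mt : 'I_N.+1 -> {vspace U}) (c : n.-tuple U) : Prop :=
  filt_compatible Mt c /\
  forall i j : 'I_n, (i <= j)%N -> supp Mt (tnth c j) \subset supp Mt (tnth c i).

Definition mx_of (U W : vectType F) (n m : nat) (cU : n.-tuple U) (cW : m.-tuple W)
  (f : 'Hom(U, W)) : 'M[F]_(m, n) :=
  \matrix_(i < m, j < n) coord cW i (f (tnth cU j)).

Definition vec_of (W : vectType F) (m : nat) (cW : m.-tuple W) (x : 'cV[F]_m) : W :=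
  \sum_(i < m) x i 0 *: tnth cW i.

(* pivot of column j: the largest (1-based) row index of a nonzero entry;
   0 for a zero column *)
Definition piv (m n : nat) (X : 'M[F]_(m, n)) (j : 'I_n) : nat :=
  \max_(i < m | X i j != 0) i.+1.

Definition reduced (m n : nat) (X : 'M[F]_(m, n)) : Prop :=
  forall j k : 'I_n, j != k -> col j X != 0 -> col k X != 0 -> piv X j != piv X k.

Definition upper_triangular (n : nat) (V : 'M[F]_n) : Prop :=
  forall i j : 'I_n, (j < i)%N -> V i j = 0.

Definition cols_in (W : vectType F) (m n : nat) (cW : m.-tuple W) (X : 'M[F]_(m, n))
  : seq W :=
  [seq vec_of cW (col j X) | j <- enum 'I_n & col j X != 0].

End Defs.

(* Main.v *)
Require Import Defs.
From HB Require Import structures.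
From mathcomp Require Import all_boot all_order all_algebra.
Import GRing.Theory.
Set Implicit Arguments. Unset Strict Implicit. Unset Printing Implicit Defensive.
Local Open Scope ring_scope.

Section Helpers.
Variable F : fieldType.

Lemma col_mulmx m n p (A : 'M[F]_(m, n)) (B : 'M[F]_(n, p)) j :
  col j (A *m B) = A *m col j B.
Proof. by apply/colP => i; rewrite !mxE; apply: eq_bigr => k _; rewrite !mxE. Qed.

Lemma vec_ofE (U : vectType F) m (c : m.-tuple U) x :
  vec_of c x = \sum_(i < m) x i 0 *: c`_i.
Proof. by apply: eq_bigr => i _; rewrite (tnth_nth 0). Qed.

Lemma vec_of0 (U : vectType F) m (c : m.-tuple U) : vec_of c 0 = 0.
Proof. by rewrite /vec_of big1 // => i _; rewrite mxE scale0r. Qed.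

Lemma vec_of_mulmx (U : vectType F) m n (c : m.-tuple U) (A : 'M[F]_(m, n)) (a : 'cV_n) :
  vec_of c (A *m a) = \sum_j a j 0 *: vec_of c (col j A).
Proof.
rewrite /vec_of; under eq_bigr => i _ do rewrite mxE scaler_suml.
rewrite exchange_big /=; apply: eq_bigr => j _; rewrite scaler_sumr.
by apply: eq_bigr => i _; rewrite !mxE scalerA mulrC.
Qed.

Lemma vec_of_mx (U W : vectType F) n m (cU : n.-tuple U) (cW : m.-tuple W)
  (f : 'Hom(U, W)) x :
  basis_of fullv cW -> vec_of cW (mx_of cU cW f *m x) = f (vec_of cU x).
Proof.
move=> bW; rewrite vec_of_mulmx /vec_of linear_sum; apply: eq_bigr => j _.
rewrite linearZ /=; congr (_ *: _).
rewrite [RHS](coord_basis bW (memvf (f (tnth cU j)))).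
apply: eq_bigr => i _. by rewrite !mxE (tnth_nth 0 cW).
Qed.

Lemma coord_vec_of (U : vectType F) n (c : n.-tuple U) x i :
  free c -> coord c i (vec_of c x) = x i 0.
Proof. by move=> fc; rewrite vec_ofE coord_sum_free. Qed.

Lemma vec_of_inj (U : vectType F) n (c : n.-tuple U) x y :
  free c -> vec_of c x = vec_of c y -> x = y.
Proof.
by move=> fc H; apply/colP => i; rewrite -(coord_vec_of x i fc) -(coord_vec_of y i fc) H.
Qed.

Lemma vec_of_eq0 (U : vectType F) n (c : n.-tuple U) x :
  free c -> vec_of c x = 0 -> x = 0.
Proof. by move=> fc H; apply: (vec_of_inj fc); rewrite H vec_of0. Qed.

Lemma vec_of_coord (U : vectType F) n (c : n.-tuple U) v :
  basis_of fullv c -> v = vec_of c (\col_i coord c i v).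
Proof.
move=> bc; rewrite vec_ofE {1}(coord_basis bc (memvf v)).
by apply: eq_bigr => i _; rewrite mxE.
Qed.

Lemma filt_prefixP (U : vectType F) N n (Ct : 'I_N.+1 -> {vspace U}) (c : n.-tuple U) t :
  filt_ordered_basis Ct c -> exists k : nat,
    forall x, (vec_of c x \in Ct t) <-> (forall i : 'I_n, (k <= i)%N -> x i 0 = 0).
Proof.
case=> [[Hb0 Hb] Hord].
have cfree : free c := basis_free Hb0.
pose S i := tnth c i \in Ct t.
have Sdown : forall i j : 'I_n, (i <= j)%N -> S j -> S i.
  move=> i j ij Sj; have := subsetP (Hord i j ij) t; rewrite !inE; exact.
exists (\max_(i < n | S i) i.+1).
have Sk : forall i : 'I_n, S i = (i < \max_(i < n | S i) i.+1)%N.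
  move=> i; apply/idP/idP => [Si|]; first exact: (leq_bigmax_cond i Si).
  apply: contraTT => nSi; rewrite -leqNgt; apply/bigmax_leqP => j Sj.
  by rewrite ltnNge; apply: contra nSi => ij; exact: Sdown ij Sj.
move=> x; split.
- move=> Hx i ki; rewrite -(coord_vec_of x i cfree).
  have HX := span_basis (Hb t).
  move: Hx; rewrite -HX => /(free_span (basis_free (Hb t))) [k' -> _].
  rewrite linear_sum big1_seq // => y; rewrite mem_filter; case/andP => _; case/andP => yCt; case/tnthP => j yj.
  rewrite linearZ /= yj (tnth_nth 0) coord_free //.
  have -> : (j == i) = false.
    apply/negP => /eqP ji; move: yCt; rewrite yj ji => Si.
    by move: ki; rewrite leqNgt -Sk /S Si.
  by rewrite mulr0.
- move=> Hx; rewrite /vec_of; apply: memv_suml => i _.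
  case: (leqP (\max_(i < n | S i) i.+1) i) => [ki|ik].
    by rewrite Hx // scale0r mem0v.
  by apply: memvZ; rewrite -/(S i) Sk.
Qed.

Lemma piv_gt m n (X : 'M[F]_(m, n)) (i : 'I_m) j : X i j != 0 -> (i < piv X j)%N.
Proof. by move=> H; exact: (leq_bigmax_cond i H). Qed.

Lemma piv_attained m n (X : 'M[F]_(m, n)) j :
  col j X != 0 -> exists i : 'I_m, X i j != 0 /\ piv X j = i.+1.
Proof.
move=> nz; case: (pickP (fun i => X i j != 0)) => [i0 Hi0|H]; last first.
  have E : col j X = 0.
    by apply/colP => i; rewrite !mxE; have := H i; move/negbFE/eqP.
  by rewrite E eqxx in nz.
rewrite /piv (@bigmax_eq_arg _ i0 (fun i => X i j != 0) (fun i : 'I_m => i.+1) Hi0).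
case: arg_maxnP => // i Hi _; by exists i.
Qed.

Lemma piv_le m n (X : 'M[F]_(m, n)) j k :
  (piv X j <= k)%N -> forall i : 'I_m, (k <= i)%N -> X i j = 0.
Proof.
move=> pk i ki; apply/eqP; apply: contraTT ki => Hi; rewrite -ltnNge.
exact: leq_trans (piv_gt Hi) pk.
Qed.

Lemma piv_bound m n (X : 'M[F]_(m, n)) (a : 'cV[F]_n) k : reduced X ->
  (forall i : 'I_m, (k <= i)%N -> (X *m a) i 0 = 0) ->
  forall j, col j X != 0 -> a j 0 != 0 -> (piv X j <= k)%N.
Proof.
move=> red Hk j0 nz0 a0; rewrite leqNgt; apply/negP => kp.
pose P := fun j => (col j X != 0) && (a j 0 != 0).
have P0 : P j0 by rewrite /P nz0 a0.
case: (@arg_maxnP _ j0 P (piv X) P0) => js /andP[nzs a1] jp.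
have [i1 [His Hps]] := piv_attained nzs.
have kis : (k <= i1)%N.
  by rewrite -ltnS -Hps; apply: leq_trans kp _; apply: jp; rewrite /P nz0 a0.
have := Hk i1 kis; rewrite mxE (bigD1 js) //= big1 ?addr0.
  by move/eqP; rewrite mulf_eq0 (negbTE His) (negbTE a1).
move=> j njs; case: (eqVneq (a j 0) 0) => [->|aj]; first by rewrite mulr0.
case: (eqVneq (col j X) 0) => [/colP/(_ i1)|cj]; first by rewrite !mxE => ->; rewrite mul0r.
have pj : (piv X j <= piv X js)%N by apply: jp; rewrite /P cj aj.
have neq := red j js njs cj nzs.
have pji : (piv X j <= i1)%N by rewrite -ltnS ltn_neqAle -Hps neq pj.
by rewrite (piv_le pji (leqnn _)) mul0r.
Qed.

Lemma piv_indep m n (X : 'M[F]_(m, n)) (a : 'cV[F]_n) : reduced X ->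
  X *m a = 0 -> forall j, col j X != 0 -> a j 0 = 0.
Proof.
move=> red Ha j nz; apply/eqP; apply/negP => /negP aj.
have H0 : forall i : 'I_m, (0 <= i)%N -> (X *m a) i 0 = 0 by move=> i _; rewrite Ha mxE.
have := piv_bound red H0 nz aj.
by have [i [_ ->]] := piv_attained nz.
Qed.

Lemma ut_diag n (V : 'M[F]_n) : V \in unitmx -> upper_triangular V -> forall j, V j j != 0.
Proof.
move=> U T j; move: U; rewrite unitmxE -det_tr det_trig.
  rewrite unitfE => /prodf_neq0 /(_ j isT); by rewrite mxE.
by apply/is_trig_mxP => i k ik; rewrite mxE T.
Qed.

Lemma ut_piv n (V : 'M[F]_n) : V \in unitmx -> upper_triangular V -> forall j, piv V j = j.+1.
Proof.
move=> U T j; apply/eqP; rewrite eqn_leq; apply/andP; split.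
  by apply/bigmax_leqP => i Hi; rewrite ltnNge; apply: contra Hi => ji; rewrite T.
exact: piv_gt (ut_diag U T j).
Qed.

Lemma ut_reduced n (V : 'M[F]_n) : V \in unitmx -> upper_triangular V -> reduced V.
Proof. by move=> U T j k njk _ _; rewrite !(ut_piv U T) eqSS. Qed.

Lemma ut_col n (V : 'M[F]_n) : V \in unitmx -> upper_triangular V -> forall j, col j V != 0.
Proof.
move=> U T j; apply/negP => /eqP/colP/(_ j); rewrite !mxE => /eqP.
by rewrite (negbTE (ut_diag U T j)).
Qed.

Lemma free_map_seq (U : vectType F) (I : eqType) (f : I -> U) (s : seq I) : uniq s ->
  (forall k : I -> F, \sum_(j <- s) k j *: f j = 0 -> forall j, j \in s -> k j = 0) ->
  free (map f s).
Proof.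
elim: s => [|x s IH] /=; first by rewrite nil_free.
case/andP=> xs us H.
have H' : forall k : I -> F, \sum_(j <- s) k j *: f j = 0 -> forall j, j \in s -> k j = 0.
  move=> k Hk j js; pose k' := fun y => if y == x then 0 else k y.
  have E : \sum_(j <- s) k' j *: f j = \sum_(j <- s) k j *: f j.
    apply: eq_big_seq => y ys.
    have : y != x by apply: contraNneq xs => <-.
    by rewrite /k' => /negbTE ->.
  have := H k'; rewrite big_cons {1}/k' eqxx scale0r add0r E => /(_ Hk j).
  rewrite in_cons js orbT /k' => /(_ isT).
  have : j != x by apply: contraNneq xs => <-.
  by move/negbTE ->.
have fs := IH us H'.
rewrite free_cons fs andbT; apply/negP => /(free_span fs) [k' Hk _].
pose k := fun y => if y == x then -1 else k' (f y).
have := H k; rewrite big_cons {1}/k eqxx.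
have -> : \sum_(j <- s) k j *: f j = f x.
  rewrite Hk big_map; apply: eq_big_seq => y ys.
  have : y != x by apply: contraNneq xs => <-.
  by rewrite /k => /negbTE ->.
rewrite scaleN1r addNr => /(_ erefl x); rewrite mem_head /k eqxx => /(_ isT) /eqP.
by rewrite oppr_eq0 oner_eq0.
Qed.

End Helpers.

Theorem lemma3p9 (F : fieldType) (C C' : vectType F) (N n : nat)
  (d : 'End(C)) (d' : 'End(C'))
  (Ct : 'I_N.+1 -> {vspace C}) (Ct' : 'I_N.+1 -> {vspace C'})
  (c : n.-tuple C) (c' : n.-tuple C') (phi : 'Hom(C, C'))
  (D D' Fm Dphi V Vphi R Rphi : 'M[F]_n) :
  chain_complex d -> chain_complex d' ->
  filtration_of_complexes d Ct -> filtration_of_complexes d' Ct' ->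
  filt_ordered_basis Ct c -> filt_ordered_basis Ct' c' ->
  D = mx_of c c d -> D' = mx_of c' c' d' ->
  (* phi_. : injective morphism of filtrations of chain complexes, phi_N iso *)
  (phi \o d = d' \o phi)%VF ->
  (forall t, (phi @: Ct t <= Ct' t)%VS) ->
  lker phi = 0%VS -> limg phi = fullv ->
  Fm = mx_of c c' phi ->
  Dphi = D *m invmx Fm ->
  V \in unitmx -> upper_triangular V ->
  Vphi \in unitmx -> upper_triangular Vphi ->
  R = D *m V -> reduced R ->
  Rphi = Dphi *m Vphi -> reduced Rphi ->
  let M := fun t => (phi @: (lker d :&: Ct t) :&: d' @: Ct' t)%VS in
  filt_compatible M (cols_in c' (Fm *m Rphi)) /\
  forall j : 'I_n, col j Rphi != 0 ->
    supp M (vec_of c' (col j (Fm *m Rphi))) =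
    (supp Ct (vec_of c (col j Rphi)) :&: supp Ct' (vec_of c' (col j Vphi)))%SET.
Proof.
move=> Hd Hd' HfC HfC' HcB HcB' HD HD' Hcomm Hphit Hker Himg HFm HDphi HVU HVT
  HVphiU HVphiT HR Hred HRphi Hredphi M.
have cbas : basis_of fullv c.
  by case: HcB => [[H _] _]; case: HfC => _ _ E; rewrite -E.
have c'bas : basis_of fullv c'.
  by case: HcB' => [[H _] _]; case: HfC' => _ _ E; rewrite -E.
have cfree := basis_free cbas.
have c'free := basis_free c'bas.
have phi_inj : injective phi by apply/lker0P; rewrite Hker.
have dd' : forall v, d' (d' v) = 0.
  by move=> v; have := congr1 (fun h : 'End(C') => h v) Hd'; rewrite comp_lfunE zero_lfunE.
have comm : forall v, phi (d v) = d' (phi v).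
  by move=> v; have := congr1 (fun h : 'Hom(C, C') => h v) Hcomm; rewrite !comp_lfunE.
have phiFm : forall x, phi (vec_of c x) = vec_of c' (Fm *m x).
  by move=> x; rewrite HFm vec_of_mx.
have dD : forall x, d (vec_of c x) = vec_of c (D *m x).
  by move=> x; rewrite HD vec_of_mx.
have FmU : Fm \in unitmx.
  rewrite unitmxE unitfE -det_tr; apply/negP => /det0P [v vnz Hv].
  have H0 : Fm *m v^T = 0 by rewrite -[Fm]trmxK -trmx_mul Hv trmx0.
  have : vec_of c v^T = 0.
    by apply: phi_inj; rewrite linear0 phiFm H0 vec_of0.
  move/(vec_of_eq0 cfree) => vT0.
  by move: vnz; rewrite -[v]trmxK vT0 trmx0 eqxx.
have key : forall a, phi (vec_of c (Rphi *m a)) = d' (vec_of c' (Vphi *m a)).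
  by move=> a; rewrite HRphi HDphi -!mulmxA -dD comm phiFm mulKVmx.
pose u j := vec_of c (col j Rphi).
pose w j := vec_of c' (col j Vphi).
pose b j := vec_of c' (col j (Fm *m Rphi)).
have ecol : forall (A : 'M[F]_n) j, col j A = A *m col j 1%:M.
  by move=> A j; rewrite -col_mulmx mulmx1.
have bu : forall j, b j = phi (u j) by move=> j; rewrite /b /u phiFm col_mulmx.
have bw : forall j, b j = d' (w j).
  by move=> j; rewrite bu /u /w (ecol Rphi) (ecol Vphi) key.
have uker : forall j, u j \in lker d.
  by move=> j; rewrite memv_ker; apply/eqP; apply: phi_inj; rewrite linear0 comm -bu bw dd'.
have bnz : forall j, (col j (Fm *m Rphi) != 0) = (col j Rphi != 0).
  move=> j; rewrite col_mulmx; apply/idP/idP; apply: contra => /eqP H.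
    by rewrite H mulmx0.
  by rewrite -[col j Rphi](mulKmx FmU) H mulmx0.
have Hexp : forall a, phi (vec_of c (Rphi *m a)) = \sum_j a j 0 *: b j.
  by move=> a; rewrite vec_of_mulmx linear_sum; apply: eq_bigr => j _; rewrite linearZ bu.
have bM : forall j t, u j \in Ct t -> w j \in Ct' t -> b j \in M t.
  move=> j t Hu Hw; rewrite /M memv_cap; apply/andP; split.
    by rewrite bu; apply: memv_img; rewrite memv_cap uker Hu.
  by rewrite bw; apply: memv_img.
have decomp : forall t x, x \in (d' @: Ct' t)%VS -> exists a : 'cV_n,
    (forall j : 'I_n, a j 0 != 0 -> w j \in Ct' t) /\ x = phi (vec_of c (Rphi *m a)).
  move=> t x /memv_imgP [y yC ->].
  have [k Hk] := filt_prefixP t HcB'.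
  pose yc := \col_i coord c' i y.
  have yE : y = vec_of c' yc := vec_of_coord y c'bas.
  exists (invmx Vphi *m yc); split; last by rewrite key mulKVmx // -yE.
  move=> j aj.
  have yk : forall i : 'I_n, (k <= i)%N -> (Vphi *m (invmx Vphi *m yc)) i 0 = 0.
    by move=> i ki; rewrite mulKVmx //; apply: (proj1 (Hk yc)) => //; rewrite -yE.
  have := piv_bound (ut_reduced HVphiU HVphiT) yk (ut_col HVphiU HVphiT j) aj.
  rewrite ut_piv // => jk.
  apply/(proj2 (Hk (col j Vphi))) => i ki; rewrite mxE; apply: HVphiT.
  exact: leq_trans jk ki.
have inM : forall t x, x \in M t -> exists a : 'cV_n,
    [/\ forall j : 'I_n, a j 0 != 0 -> w j \in Ct' t,
        x = phi (vec_of c (Rphi *m a)) & vec_of c (Rphi *m a) \in Ct t].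
  move=> t x; rewrite /M memv_cap => /andP[/memv_imgP [z /memv_capP[_ zC] xz] /decomp [a [Ha xa]]].
  exists a; split => //.
  have -> : vec_of c (Rphi *m a) = z by apply: phi_inj; rewrite -xa -xz.
  exact: zC.
have BlE : cols_in c' (Fm *m Rphi) = map b [seq j <- enum 'I_n | col j Rphi != 0].
  by rewrite /cols_in (@eq_filter _ _ (fun j => col j Rphi != 0) bnz).
have Bfree : free (cols_in c' (Fm *m Rphi)).
  rewrite BlE; apply: free_map_seq; first by rewrite filter_uniq // enum_uniq.
  move=> k Hk j; rewrite mem_filter => /andP[nzj _].
  pose a := \col_j (if col j Rphi != 0 then k j else 0) : 'cV_n.
  have Ra0 : Rphi *m a = 0.
    apply: (vec_of_eq0 cfree); apply: phi_inj; rewrite linear0 Hexp -[RHS]Hk.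
    rewrite big_filter [RHS]big_mkcond enumT /=.
    by apply: eq_bigr => i _; rewrite mxE; case: ifP => _ //; rewrite scale0r.
  by have := piv_indep Hredphi Ra0 nzj; rewrite mxE nzj.
have Hgen : forall t, basis_of (M t) [seq x <- cols_in c' (Fm *m Rphi) | x \in M t].
  move=> t; rewrite /basis_of filter_free ?Bfree // andbT eqEsubv; apply/andP; split.
    by apply/span_subvP => x; rewrite mem_filter => /andP[].
  apply/subvP => x /inM [a [Ha xa za]].
  have [k Hk] := filt_prefixP t HcB.
  have Rk := proj1 (Hk _) za.
  rewrite xa Hexp; apply: memv_suml => j _.
  case: (eqVneq (a j 0) 0) => [->|aj]; first by rewrite scale0r mem0v.
  case: (eqVneq (col j Rphi) 0) => [cz|cnz].
    by rewrite /b col_mulmx cz mulmx0 vec_of0 scaler0 mem0v.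
  apply: memvZ; apply: memv_span; rewrite mem_filter; apply/andP; split.
    apply: bM; last exact: Ha.
    apply/(proj2 (Hk _)) => i ki; rewrite mxE.
    exact: piv_le (piv_bound Hredphi Rk cnz aj) i ki.
  by rewrite BlE; apply: map_f; rewrite mem_filter cnz mem_enum.
split.
  split => //.
  have allM : all (fun x => x \in M ord_max) (cols_in c' (Fm *m Rphi)).
    apply/allP => x; rewrite BlE => /mapP [j]; rewrite mem_filter => /andP[nz _] ->.
    by apply: bM; [case: HfC => _ _ ->|case: HfC' => _ _ ->]; apply: memvf.
  by have := Hgen ord_max; rewrite (all_filterP allM).
move=> j nz; apply/setP => t; rewrite !inE.
change ((b j \in M t) = (u j \in Ct t) && (w j \in Ct' t)).
apply/idP/andP => [/inM [a [Ha xa za]]|[Hu Hw]]; last exact: bM.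
have Eq : Rphi *m a = col j Rphi.
  apply: (vec_of_inj cfree); apply: phi_inj; rewrite -xa bu /u.
  by rewrite (ecol Rphi).
have E : Rphi *m (a - col j 1%:M) = 0 by rewrite mulmxBr Eq -ecol subrr.
have := piv_indep Hredphi E nz; rewrite !mxE eqxx /= => /eqP; rewrite subr_eq0 => /eqP aj1.
split; first by rewrite /u -Eq.
by apply: Ha; rewrite aj1 oner_neq0.
Qed.
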